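(* Let $a<b$ and let $X$ be a random variable taking values in $[a,b]$, with probability density function $f:[a,b]\rightarrow[0,1]$ and cumulative distribution function $F(x)=\Pr(X\le x)=\int_a^x f(t)\,dt$. Assume that $F$ is twice continuously differentiable in $(a,b)$ (so $F'=f$) with $f'\in L^2[a,b]$. Then for all $x\in[a,\frac{a+b}{2}]$, \[ \left|\frac{1}{2}[F(x)+F(a+b-x)]-\frac{b-E(X)}{b-a}\right|\leq \frac{(b-a)^{1/2}}{\pi}\left[\frac{(b-a)^2}{48}+\left(x-\frac{3a+b}{4}\right)^2\right]^{1/2}\|f'\|_2, \] where $E(X)$ is the expectation of $X$.
   Context: $\|g\|_2=\left(\int_a^b g(t)^2\,dt\right)^{1/2}$. *)

(* Defs.v *)
From HB Require Import structures.
From mathcomp Require Import all_boot all_order all_algebra.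
From mathcomp Require Import all_classical all_reals all_analysis.
Set Implicit Arguments. Unset Strict Implicit. Unset Printing Implicit Defensive.
Import Order.TTheory GRing.Theory Num.Theory.
Import numFieldNormedType.Exports.
Local Open Scope classical_set_scope.
Local Open Scope ring_scope.

Definition cdf_of {R : realType} (f : R -> R) (a x : R) : R :=
  \int[@lebesgue_measure R]_(t in `[a, x]) f t.

Definition mean_of {R : realType} (f : R -> R) (a b : R) : R :=
  \int[@lebesgue_measure R]_(t in `[a, b]) (t * f t).

Definition L2norm {R : realType} (g : R -> R) (a b : R) : R :=
  Num.sqrt (\int[@lebesgue_measure R]_(t in `[a, b]) (g t ^+ 2)).

(* Main.v *)
Require Import Defs.
From HB Require Import structures.
From mathcomp Require Import all_boot all_order all_algebra.
From mathcomp Require Import all_classical all_reals all_analysis.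
From mathcomp Require Import measurable_realfun.
From mathcomp Require Import ring lra zify.
Import Order.TTheory GRing.Theory Num.Theory.
Import numFieldNormedType.Exports.
Local Open Scope classical_set_scope.
Local Open Scope ring_scope.
Section PiBound.
Variable R : realType.
Let c : R := 79 / 50.
Lemma cos_c_lt0 : cos c < 0.
Proof.
rewrite -(opprK (cos _)) oppr_lt0; have /cvgN h := @cvg_cos_coeff' R c.
rewrite -(cvg_lim (@Rhausdorff R) h).
apply: (@lt_trans _ _ (\sum_(0 <= i < 5) - cos_coeff' c i)).
  do 5 rewrite big_nat_recl//; rewrite big_nil addr0 /cos_coeff'.
  rewrite /c -!exprnP /= !factS fact0 !natrM.
  lra.
rewrite -seriesN lt_sum_lim_series //.
  by move/cvgP in h; by rewrite seriesN.
move=> d.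
rewrite /cos_coeff' -!exprnP.
rewrite -[(-1) ^+ (5 + d.*2)%N]signr_odd -[(-1) ^+ (5 + d.*2.+1)%N]signr_odd.
rewrite !oddD odd_double /= negbK odd_double expr0 expr1 mulN1r mul1r mulNr opprK.
have -> : ((5 + d.*2.+1).*2)`! = ((5 + d.*2).*2).+2`!.
  by congr (_`!); rewrite doubleS addnS.
set m := (5 + d.*2).*2.
have -> : (m.+2)`! = (m.+2 * m.+1 * m`!)%N by rewrite factS factS mulnA.
rewrite natrM.
have m10 : (10 <= m)%N by rewrite /m -addnn; lia.
have -> : c ^+ m.+2 = c ^+ m * (c * c) by rewrite !exprS; ring.
have cp : 0 < c ^+ m by rewrite exprn_gt0 // /c; lra.
have kp : 0 < (m`!)%:R :> R by rewrite ltr0n fact_gt0.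
have Np : 132 <= (m.+2 * m.+1)%:R :> R.
  rewrite ler_nat; nia.
set p := c ^+ m. set k : R := (m`!)%:R. set N : R := (m.+2 * m.+1)%:R.
have -> : p * (c * c) / (N * k) = (p / k) * ((c * c) / N) by rewrite invfM; ring.
have Q1 : (c * c) / N < 1.
  rewrite ltr_pdivrMr; last by lra.
  rewrite mul1r /c; lra.
have Q0 : 0 <= (c * c) / N by apply: divr_ge0; [rewrite /c; nra | lra].
have P0 : 0 < p / k by rewrite divr_gt0.
rewrite -{1}[p / k]mulr1 -mulrBr; apply: mulr_gt0 => //; rewrite subr_gt0 //.
Qed.

Lemma pi_sq_le10 : pi ^+ 2 <= 10 :> R.
Proof.
have hp : pi / 2 < c.
  rewrite ltNge; apply/negP => hc.
  have [hlt|heq] : c < pi / 2 \/ c = pi / 2.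
    by move: hc; rewrite le_eqVlt => /orP[/eqP->|->]; [right|left].
  - have := @cos_gt0_pihalf R c.
    rewrite hlt andbT => /(_ _) H.
    have : 0 < cos c by apply: H; rewrite /c; have := pi_gt0 R; lra.
    have := cos_c_lt0; lra.
  - have := cos_c_lt0; rewrite heq cos_pihalf; lra.
have := pi_gt0 R; move: hp; rewrite /c => hp hp0.
nra.
Qed.
End PiBound.
Section Helpers.
Variable R : realType.
Notation mu := (@lebesgue_measure R).

Lemma split_int (h : R -> R) (u v w : R) : u <= v -> v <= w ->
  mu.-integrable `[u, w] (EFin \o h) ->
  \int[mu]_(t in `[u, w]) h t = \int[mu]_(t in `[u, v]) h t + \int[mu]_(t in `[v, w]) h t.
Proof.
move=> uv vw hi.
have H0 := @Rintegral_itvB R h (BLeft u) (BRight w) v hi.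
have H1 : (BLeft u <= BRight v)%O by rewrite bnd_simp.
have H2 : (BRight v <= BRight w)%O by rewrite bnd_simp.
have H := H0 H1 H2.
rewrite Rintegral_itv_obnd_cbnd in H; last first.
  apply: integrableS hi => //; apply: subset_itvr; rewrite bnd_simp //.
rewrite -H; ring.
Qed.

Lemma cont_int_mul (g h : R -> R) (u v : R) : continuous h ->
  mu.-integrable `[u, v] (EFin \o g) ->
  mu.-integrable `[u, v] (EFin \o (fun t => h t * g t)).
Proof.
move=> ch gi.
have -> : EFin \o (fun t => h t * g t) = ((EFin \o h) \* (EFin \o g))%E.
  by apply/funext => t /=.
apply: integrableMr => //.
- by apply: subspace_continuous_measurable_fun => //; exact: continuous_subspaceT.
- have ctsf : {within `[u, v], continuous h}.
    by apply: continuous_subspaceT.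
  have /compact_bounded[M [_ mrt]] := continuous_compact ctsf (@segment_compact _ u v).
  by exists M; split; rewrite ?num_real // => ? ? ? ?; exact: mrt.
Qed.

Lemma cst_cont (c : R) : continuous (fun _ : R => c).
Proof. by move=> t; exact: cvg_cst. Qed.

Definition Pq (c k : R) (t : R) : R := (t - c) ^+ 2 / 2 + k.

Lemma P_derive c k t : derivable (Pq c k) t 1 /\ derive1 (Pq c k) t = t - c.
Proof.
have H : is_derive t 1 (Pq c k) (t - c).
  rewrite /Pq. apply: is_derive_eq.
  by rewrite /GRing.scale /=; field.
have [d1 d2] := H.
by split => //; rewrite derive1E.
Qed.

Lemma Pq_cont c k : continuous (Pq c k).
Proof.
move=> t; apply: differentiable_continuous; rewrite -derivable1_diffP.
exact: (P_derive c k t).1.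
Qed.

Lemma Pq_LR c k u v : derivable_oo_LRcontinuous (Pq c k) u v.
Proof.
split.
- by move=> t _; exact: (P_derive c k t).1.
- exact/cvg_at_right_filter/Pq_cont.
- exact/cvg_at_left_filter/Pq_cont.
Qed.

Definition Gq (c k t : R) : R := (t - c) ^+ 5 / 20 + k * (t - c) ^+ 3 / 3 + k ^+ 2 * t.

Lemma G_derive c k t : derivable (Gq c k) t 1 /\ derive1 (Gq c k) t = Pq c k t ^+ 2.
Proof.
have H : is_derive t 1 (Gq c k) (Pq c k t ^+ 2).
  rewrite /Gq /Pq. apply: is_derive_eq.
  by rewrite /GRing.scale /=; field.
have [d1 d2] := H.
by split => //; rewrite derive1E.
Qed.

Lemma int_Pq2 c k u v : u <= v ->
  \int[mu]_(t in `[u, v]) (Pq c k t ^+ 2) = Gq c k v - Gq c k u.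
Proof.
rewrite le_eqVlt => /orP[/eqP <-|uv].
  by rewrite set_itv1 Rintegral_set1 subrr.
rewrite /Rintegral (@continuous_FTC2 R (fun t => Pq c k t ^+ 2) (Gq c k) u v uv) //.
- apply: continuous_subspaceT => t; exact: (@continuous_comp _ _ _ (Pq c k) (fun x => x ^+ 2) t (Pq_cont c k t) (@exprn_continuous R 2 _)).
- split.
  + by move=> t _; exact: (G_derive c k t).1.
  + apply/cvg_at_right_filter; apply: differentiable_continuous; rewrite -derivable1_diffP; exact: (G_derive c k u).1.
  + apply/cvg_at_left_filter; apply: differentiable_continuous; rewrite -derivable1_diffP; exact: (G_derive c k v).1.
- by move=> t _; rewrite (G_derive c k t).2.
Qed.

Definition k2f (a b x : R) := (x - a) ^+ 2 / 2 - (x - (a + b) / 2) ^+ 2 / 2.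

Lemma poly_ineq (a b x : R) : a <= x -> x <= (a + b) / 2 ->
  10 * ((Gq a 0 x - Gq a 0 a) + (Gq ((a + b) / 2) (k2f a b x) (a + b - x)
     - Gq ((a + b) / 2) (k2f a b x) x) + (Gq b 0 b - Gq b 0 (a + b - x)))
  <= (b - a) ^+ 2 * (b - a) * ((b - a) ^+ 2 / 48 + (x - (3 * a + b) / 4) ^+ 2).
Proof.
move=> ax xm.
set s := x - a. set w := b - a - 2 * s.
have s0 : 0 <= s by rewrite /s; lra.
have w0 : 0 <= w by rewrite /w /s; lra.
have eb : b = a + 2 * s + w by rewrite /w /s; ring.
have ex : x = a + s by rewrite /s; ring.
rewrite /k2f /Gq; rewrite eb ex.
rewrite -subr_ge0.
set g := 5/6 * s ^+ 3 - 1/3 * s ^+ 2 * w + 1/2 * s * w ^+ 2 + 1/3 * w ^+ 3.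
have E : forall z : R, z = z by [].
have gpos : 0 <= g.
  have q : 0 <= 5/6 * s ^+ 2 - 1/3 * s * w + 1/2 * w ^+ 2.
    have := sqr_ge0 (s - w / 5); have := sqr_ge0 w; nra.
  have : 0 <= s * (5/6 * s ^+ 2 - 1/3 * s * w + 1/2 * w ^+ 2) by exact: mulr_ge0.
  have : 0 <= w ^+ 3 by rewrite exprn_ge0.
  rewrite /g; nra.
have L0 : 0 <= 2 * s + w by lra.
apply: (le_trans (mulr_ge0 (mulr_ge0 s0 L0) gpos)).
rewrite le_eqVlt; apply/orP; left; apply/eqP; rewrite /g; by field.
Qed.
Lemma amgm_sqrt (z N C : R) : 0 <= N -> 0 <= C ->
  (forall l, 0 < l -> z <= (l * N + C / l) / 2) -> z <= Num.sqrt N * Num.sqrt C.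
Proof.
move=> N0 C0 H.
have [Np|Ne] := boolP (0 < N); have [Cp|Ce] := boolP (0 < C).
- have sN : 0 < Num.sqrt N by rewrite sqrtr_gt0.
  have sC : 0 < Num.sqrt C by rewrite sqrtr_gt0.
  have := H (Num.sqrt C / Num.sqrt N) (divr_gt0 sC sN).
  move=> h; apply: le_trans h _; rewrite le_eqVlt; apply/orP; left; apply/eqP.
  have eN := sqr_sqrtr N0; have eC := sqr_sqrtr C0.
  move: sN sC eN eC; set sn := Num.sqrt N; set sc := Num.sqrt C => sN sC eN eC.
  rewrite -eN -eC.
  by field; rewrite !gt_eqF.
- have Ce0 : C = 0 by apply/eqP; rewrite eq_le C0 andbT leNgt.
  rewrite Ce0 in H *.
  rewrite sqrtr0 mulr0 leNgt; apply/negP => z0.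
  have := H (z / (N + 1)) (divr_gt0 z0 (ltr_pwDr ltr01 N0)).
  rewrite mul0r addr0 => h.
  have : z / (N + 1) * N < z.
    rewrite mulrAC ltr_pdivrMr; last by lra.
    nra.
  lra.
- have Ne0 : N = 0 by apply/eqP; rewrite eq_le N0 andbT leNgt.
  rewrite Ne0 in H *.
  rewrite sqrtr0 mul0r leNgt; apply/negP => z0.
  have := H ((C + 1) / z) (divr_gt0 (ltr_pwDr ltr01 C0) z0).
  rewrite mulr0 add0r => h.
  have : C / ((C + 1) / z) < 2 * z.
    rewrite invfM invrK mulrA mulrAC ltr_pdivrMr; last by lra.
    nra.
  lra.
- have Ce0 : C = 0 by apply/eqP; rewrite eq_le C0 andbT leNgt.
  have Ne0 : N = 0 by apply/eqP; rewrite eq_le N0 andbT leNgt.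
  rewrite Ce0 Ne0 in H *.
  rewrite sqrtr0 mulr0 leNgt; apply/negP => z0.
  have := H 1 ltr01; rewrite mul1r mul0r add0r; lra.
Qed.

Section Main.
Variables (f : R -> R) (a b : R).
Hypothesis hab : a < b.
Hypothesis hf01 : forall t, a <= t <= b -> 0 <= f t <= 1.
Hypothesis hfint : mu.-integrable `[a, b] (fun t => (f t)%:E).
Hypothesis hf2 : forall x, a < x < b -> derivable f x 1.
Hypothesis hf'c : {within `]a, b[, continuous derive1 f}.
Hypothesis hfp2 : mu.-integrable `[a, b] (fun t => ((derive1 f t) ^+ 2)%:E).
Hypothesis hf1 : \int[mu]_(t in `[a, b]) f t = 1.
Notation fp := (derive1 f).

Lemma f_cont t : a < t < b -> {for t, continuous f}.
Proof.
move=> ht; apply: differentiable_continuous; rewrite -derivable1_diffP.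
exact: hf2.
Qed.

Lemma ibp_in u v c k : a < u -> u < v -> v < b ->
  \int[mu]_(t in `[u, v]) (f t * (t - c)) =
  f v * Pq c k v - f u * Pq c k u - \int[mu]_(t in `[u, v]) (fp t * Pq c k t).
Proof.
move=> au uv vb.
apply: Rintegration_by_parts => //.
- apply: continuous_subspaceW hf'c => t /=; rewrite !in_itv /= => /andP[h1 h2].
  apply/andP; split; lra.
- split.
  + move=> t; rewrite in_itv /= => /andP[h1 h2]; apply: hf2; lra.
  + apply/cvg_at_right_filter/f_cont; lra.
  + apply/cvg_at_left_filter/f_cont; lra.
- apply: continuous_subspaceT => t.
  apply: (@continuousB _ _ _ (fun x => x) (fun _ => c)); [exact: cvg_id | exact: cvg_cst].
- exact: Pq_LR.
- by move=> t _; rewrite (P_derive c k t).2.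
Qed.

Lemma mfp : measurable_fun `[a, b] fp.
Proof.
apply: (@measurable_fun_itv_cc R a b false true).
apply: open_continuous_measurable_fun.
  exact: (@interval_open R (BRight a) (BLeft b)).
by rewrite -continuous_open_subspace //; exact: (@interval_open R (BRight a) (BLeft b)).
Qed.

Lemma norm_mul_le (x y : R) : `|x * y| <= x ^+ 2 + y ^+ 2.
Proof.
have := sqr_ge0 (`|x| - `|y|); rewrite -(real_normK (num_real x)) -(real_normK (num_real y)) normrM.
have := normr_ge0 x; have := normr_ge0 y; nra.
Qed.

Lemma int_fpQ u v c k : a <= u -> v <= b ->
  mu.-integrable `[u, v] (EFin \o (fun t => fp t * Pq c k t)).
Proof.
move=> au vb.
have sub : `[u, v] `<=` `[a, b] by apply: subset_itv; rewrite bnd_simp.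
apply: (@le_integrable _ _ _ mu _ _ _ (EFin \o (fun t => Pq c k t ^+ 2 + fp t ^+ 2))) => //.
- apply/measurable_EFinP; apply: measurable_funM.
    exact: measurable_funS mfp.
  apply: subspace_continuous_measurable_fun => //; apply: continuous_subspaceT; exact: Pq_cont.
- move=> t _ /=; rewrite lee_fin (@ger0_norm _ (Pq c k t ^+ 2 + fp t ^+ 2)); first by rewrite [X in _ <= X]addrC; exact: norm_mul_le.
  by rewrite addr_ge0 // sqr_ge0.
- have -> : EFin \o (fun t => Pq c k t ^+ 2 + fp t ^+ 2) =
     ((EFin \o (fun t => (Pq c k t ^+ 2)%R)) \+ (fun t => ((fp t ^+ 2)%R)%:E))%E.
    by apply/funext => t.
  apply: integrableD => //.
    apply: continuous_compact_integrable; first exact: segment_compact.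
    apply: continuous_subspaceT => t; exact: (@continuous_comp _ _ _ (Pq c k) (fun x => x ^+ 2) t (Pq_cont c k t) (@exprn_continuous R 2 _)).
  exact: integrableS hfp2.
Qed.

Lemma int_fl u v c : a <= u -> v <= b ->
  mu.-integrable `[u, v] (EFin \o (fun t => f t * (t - c))).
Proof.
move=> au vb.
have sub : `[u, v] `<=` `[a, b] by apply: subset_itv; rewrite bnd_simp.
have -> : EFin \o (fun t => f t * (t - c)) = EFin \o (fun t => (t - c) * f t).
  by apply/funext => t /=; rewrite mulrC.
apply: cont_int_mul.
  move=> t; apply: (@continuousB _ _ _ (fun x => x) (fun _ => c)); [exact: cvg_id | exact: cvg_cst].
exact: integrableS hfint.
Qed.

Lemma fnorm_le1 u : a <= u <= b -> `|f u| <= 1.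
Proof. by move=> /hf01 /andP[h0 h1]; rewrite ger0_norm. Qed.

Lemma bterm_right c k : Pq c k a = 0 -> (fun u => f u * Pq c k u) @ a^'+ --> 0.
Proof.
move=> P0.
have hP : Pq c k u @[u --> a^'+] --> 0 by rewrite -P0; exact/cvg_at_right_filter/Pq_cont.
apply/cvgrPdist_le => e e0.
move/cvgrPdist_le : hP => /(_ e e0) hP.
near=> u.
have au : a < u by near: u; exact: nbhs_right_gt.
have ub : u < b by near: u; exact: nbhs_right_lt.
have Pu : `|0 - Pq c k u| <= e by near: u; exact: hP.
rewrite sub0r normrN normrM. rewrite sub0r normrN in Pu.
apply: le_trans Pu; apply: ler_piMl => //.
apply: fnorm_le1; apply/andP; split; lra.
Unshelve. all: by end_near.
Qed.

Lemma bterm_left c k : Pq c k b = 0 -> (fun u => f u * Pq c k u) @ b^'- --> 0.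
Proof.
move=> P0.
have hP : Pq c k u @[u --> b^'-] --> 0 by rewrite -P0; exact/cvg_at_left_filter/Pq_cont.
apply/cvgrPdist_le => e e0.
move/cvgrPdist_le : hP => /(_ e e0) hP.
near=> u.
have au : a < u by near: u; exact: nbhs_left_gt.
have ub : u < b by near: u; exact: nbhs_left_lt.
have Pu : `|0 - Pq c k u| <= e by near: u; exact: hP.
rewrite sub0r normrN normrM. rewrite sub0r normrN in Pu.
apply: le_trans Pu; apply: ler_piMl => //.
apply: fnorm_le1; apply/andP; split; lra.
Unshelve. all: by end_near.
Qed.

Lemma ibp_left v c k : a < v -> v < b -> Pq c k a = 0 ->
  \int[mu]_(t in `[a, v]) (f t * (t - c)) =
  f v * Pq c k v - \int[mu]_(t in `[a, v]) (fp t * Pq c k t).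
Proof.
move=> av vb P0.
have i1 := @int_fl a v c (lexx a) (ltW vb).
have i2 := @int_fpQ a v c k (lexx a) (ltW vb).
pose K u := \int[mu]_(t in `[a, u]) (f t * (t - c)) - f u * Pq c k u
            + \int[mu]_(t in `[a, u]) (fp t * Pq c k t).
have Ku : forall u, a < u < v -> K u = K v.
  move=> u /andP[au uv].
  rewrite /K (@split_int _ a u v (ltW au) (ltW uv) i1) (@split_int _ a u v (ltW au) (ltW uv) i2).
  rewrite (@ibp_in u v c k au uv vb); ring.
have lim0 : K u @[u --> a^'+] --> 0.
  rewrite -[0](addr0 0) -[X in X + _](subr0 0).
  apply: cvgD; first apply: cvgB.
  - exact: (cvg_at_right_filter (parameterized_integral_cvg_left av i1)).
  - exact: bterm_right.
  - exact: (cvg_at_right_filter (parameterized_integral_cvg_left av i2)).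
have limc : K u @[u --> a^'+] --> K v.
  apply: cvg_near_cst; near=> u; apply: Ku; apply/andP; split.
    by near: u; exact: nbhs_right_gt.
  by near: u; exact: nbhs_right_lt.
have := cvg_unique _ lim0 limc => /(_ _) K0.
have {}K0 : K v = 0 by rewrite K0.
move: K0; rewrite /K => K0; lra.
Unshelve. all: by end_near.
Qed.

Lemma ibp_right u c k : a < u -> u < b -> Pq c k b = 0 ->
  \int[mu]_(t in `[u, b]) (f t * (t - c)) =
  - (f u * Pq c k u) - \int[mu]_(t in `[u, b]) (fp t * Pq c k t).
Proof.
move=> au ub P0.
have i1 := @int_fl u b c (ltW au) (lexx b).
have i2 := @int_fpQ u b c k (ltW au) (lexx b).
pose K v := \int[mu]_(t in `[u, v]) (f t * (t - c)) - f v * Pq c k v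
            + \int[mu]_(t in `[u, v]) (fp t * Pq c k t).
have Kv : forall v, u < v < b -> K v = - (f u * Pq c k u).
  move=> v /andP[uv vb].
  rewrite /K (@ibp_in u v c k au uv vb); ring.
have lim0 : K v @[v --> b^'-] --> \int[mu]_(t in `[u, b]) (f t * (t - c)) - 0
     + \int[mu]_(t in `[u, b]) (fp t * Pq c k t).
  apply: cvgD; first apply: cvgB.
  - exact: (parameterized_integral_cvg_at_left ub i1).
  - exact: bterm_left.
  - exact: (parameterized_integral_cvg_at_left ub i2).
have limc : K v @[v --> b^'-] --> - (f u * Pq c k u).
  apply: cvg_near_cst; near=> v; apply: Kv; apply/andP; split.
    by near: v; exact: nbhs_left_gt.
  by near: v; exact: nbhs_left_lt.
have K0 : - (f u * Pq c k u) = \int[mu]_(t in `[u, b]) (f t * (t - c)) - 0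
     + \int[mu]_(t in `[u, b]) (fp t * Pq c k t).
  apply: (cvg_unique _ limc lim0); exact: Rhausdorff.
lra.
Unshelve. all: by end_near.
Qed.

Lemma ibp_piece u v c k : a <= u -> u <= v -> v <= b ->
  (u = a -> Pq c k u = 0) -> (v = b -> Pq c k v = 0) ->
  \int[mu]_(t in `[u, v]) (f t * (t - c)) =
  f v * Pq c k v - f u * Pq c k u - \int[mu]_(t in `[u, v]) (fp t * Pq c k t).
Proof.
move=> au uv vb Pu Pv.
have [euv|luv] := eqVneq u v.
  by rewrite -euv set_itv1 !Rintegral_set1; ring.
have {}uv : u < v by rewrite lt_neqAle luv uv.
have [eua|nua] := eqVneq u a; have [evb|nvb] := eqVneq v b.
- have am : a < (a + b) / 2 by lra.
  have mb : (a + b) / 2 < b by lra.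
  rewrite eua evb in Pu Pv *.
  rewrite (@split_int _ a ((a + b) / 2) b (ltW am) (ltW mb)); last exact: (@int_fl a b c).
  rewrite [X in _ = _ - X](@split_int _ a ((a + b) / 2) b (ltW am) (ltW mb)); last exact: (@int_fpQ a b c k).
  rewrite (@ibp_left _ c k am mb (Pu erefl)) (@ibp_right _ c k am mb (Pv erefl)).
  rewrite (Pu erefl) (Pv erefl); ring.
- have vb' : v < b by rewrite lt_neqAle nvb vb.
  rewrite eua in Pu uv *.
  rewrite (@ibp_left v c k uv vb' (Pu erefl)) (Pu erefl); ring.
- have au' : a < u by rewrite lt_neqAle eq_sym nua au.
  rewrite evb in Pv uv *.
  rewrite (@ibp_right u c k au' uv (Pv erefl)) (Pv erefl); ring.
- have vb' : v < b by rewrite lt_neqAle nvb vb.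
  have au' : a < u by rewrite lt_neqAle eq_sym nua au.
  exact: ibp_in.
Qed.

Lemma amgm_pt (l x y : R) : 0 < l -> `|x * y| <= (l * y ^+ 2 + x ^+ 2 / l) / 2.
Proof.
move=> l0.
have := sqr_ge0 (l * `|y| - `|x|).
rewrite -(real_normK (num_real x)) -(real_normK (num_real y)) normrM.
have li : l * l^-1 = 1 by rewrite mulfV // gt_eqF.
have := normr_ge0 x; have := normr_ge0 y.
set X := `|x|; set Y := `|y| => Y0 X0 H.
have il : 0 < l^-1 by rewrite invr_gt0.
rewrite -subr_ge0.
have -> : (l * Y ^+ 2 + X ^+ 2 / l) / 2 - X * Y = (l * Y - X) ^+ 2 * (l^-1 / 2).
  by field; rewrite gt_eqF.
by apply: mulr_ge0 => //; rewrite divr_ge0 // ltW.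
Qed.

Lemma cs_piece u v c k l : a <= u -> u <= v -> v <= b -> 0 < l ->
  `|\int[mu]_(t in `[u, v]) (fp t * Pq c k t)| <=
  (l * \int[mu]_(t in `[u, v]) (Pq c k t ^+ 2) + \int[mu]_(t in `[u, v]) (fp t ^+ 2) / l) / 2.
Proof.
move=> au uv vb l0.
have sub : `[u, v] `<=` `[a, b] by apply: subset_itv; rewrite bnd_simp.
have i1 := @int_fpQ u v c k au vb.
have iQ : mu.-integrable `[u, v] (EFin \o (fun t => Pq c k t ^+ 2)).
  apply: continuous_compact_integrable; first exact: segment_compact.
  apply: continuous_subspaceT => t; exact: (@continuous_comp _ _ _ (Pq c k) (fun x => x ^+ 2) t (Pq_cont c k t) (@exprn_continuous R 2 _)).
have iF : mu.-integrable `[u, v] (EFin \o (fun t => fp t ^+ 2)).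
  exact: integrableS hfp2.
apply: le_trans (le_normr_Rintegral _ i1) _ => //.
have ilQ : mu.-integrable `[u, v] (EFin \o (fun t => l * Pq c k t ^+ 2)).
  exact: (@cont_int_mul (fun t => Pq c k t ^+ 2) (fun=> l) u v (cst_cont l) iQ).
have iFl : mu.-integrable `[u, v] (EFin \o (fun t => l^-1 * fp t ^+ 2)).
  exact: (@cont_int_mul (fun t => fp t ^+ 2) (fun=> l^-1) u v (cst_cont _) iF).
have iS : mu.-integrable `[u, v] (EFin \o (fun t => l * Pq c k t ^+ 2 + l^-1 * fp t ^+ 2)).
  have -> : EFin \o (fun t => l * Pq c k t ^+ 2 + l^-1 * fp t ^+ 2) =
     ((EFin \o (fun t => (l * Pq c k t ^+ 2)%R)) \+ (EFin \o (fun t => (l^-1 * fp t ^+ 2)%R)))%E.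
    by apply/funext => t.
  exact: integrableD.
apply: (@le_trans _ _ (\int[mu]_(t in `[u, v]) ((l * Pq c k t ^+ 2 + l^-1 * fp t ^+ 2) / 2))).
  apply: le_Rintegral => //.
  - exact: integrable_norm.
  - have -> : EFin \o (fun t => (l * Pq c k t ^+ 2 + l^-1 * fp t ^+ 2) / 2) =
       EFin \o (fun t => (l * Pq c k t ^+ 2 + l^-1 * fp t ^+ 2) * 2^-1).
      by [].
    have -> : EFin \o (fun t => (l * Pq c k t ^+ 2 + l^-1 * fp t ^+ 2) * 2^-1) =
       EFin \o (fun t => 2^-1 * (l * Pq c k t ^+ 2 + l^-1 * fp t ^+ 2)).
      by apply/funext => t /=; rewrite mulrC.
    exact: (@cont_int_mul (fun t => l * Pq c k t ^+ 2 + l^-1 * fp t ^+ 2) (fun=> 2^-1) u v (cst_cont _) iS).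
  - move=> t _; have := @amgm_pt l (fp t) (Pq c k t) l0.
    by rewrite mulrC [_ ^+ 2 / l]mulrC.
rewrite (_ : (fun t => (l * Pq c k t ^+ 2 + l^-1 * fp t ^+ 2) / 2) =
             (fun t => (l * Pq c k t ^+ 2 + l^-1 * fp t ^+ 2) * 2^-1)) //.
rewrite RintegralZr // RintegralD // !RintegralZl //.
by rewrite [_ / l]mulrC.
Qed.


Lemma dec_piece u v c : a <= u -> v <= b ->
  \int[mu]_(t in `[u, v]) (f t * (t - c)) =
  \int[mu]_(t in `[u, v]) (t * f t) - c * \int[mu]_(t in `[u, v]) f t.
Proof.
move=> au vb.
have sub : `[u, v] `<=` `[a, b] by apply: subset_itv; rewrite bnd_simp.
have iF : mu.-integrable `[u, v] (EFin \o f) by exact: integrableS hfint.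
have itf : mu.-integrable `[u, v] (EFin \o (fun t => t * f t)).
  by apply: (@cont_int_mul f (fun t => t)) => // t; exact: cvg_id.
have icf : mu.-integrable `[u, v] (EFin \o (fun t => c * f t)).
  exact: (@cont_int_mul f (fun=> c) u v (cst_cont c) iF).
have -> : \int[mu]_(t in `[u, v]) (f t * (t - c)) =
    \int[mu]_(t in `[u, v]) (t * f t - c * f t) by apply: eq_Rintegral => t _; ring.
by rewrite RintegralB // RintegralZl.
Qed.

Lemma main_bound x : a <= x <= (a + b) / 2 ->
  `| (cdf_of f a x + cdf_of f a (a + b - x)) / 2 - (b - mean_of f a b) / (b - a) |
    <= Num.sqrt (b - a) / pi * Num.sqrt ((b - a) ^+ 2 / 48 + (x - (3 * a + b) / 4) ^+ 2)
       * L2norm fp a b.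
Proof.
move=> /andP[ax xm].
have hab' := hab.
have hx2 : 2 * x <= a + b by lra.
have xy : x <= a + b - x by lra.
have yb : a + b - x <= b by lra.
have ay : a <= a + b - x by lra.
have xb : x <= b by lra.
set y := a + b - x.
set m := (a + b) / 2.
set k2 := k2f a b x.
have iF : mu.-integrable `[a, b] (EFin \o f) := hfint.
have itf : mu.-integrable `[a, b] (EFin \o (fun t => t * f t)).
  by apply: (@cont_int_mul f (fun t => t)) => // t; exact: cvg_id.
have ifp2 : mu.-integrable `[a, b] (EFin \o (fun t => fp t ^+ 2)) := hfp2.
have sA : \int[mu]_(t in `[a, b]) f t = \int[mu]_(t in `[a, x]) f t
   + \int[mu]_(t in `[x, y]) f t + \int[mu]_(t in `[y, b]) f t.
  rewrite (@split_int _ a x b ax xb iF) (@split_int _ x y b xy yb); first ring.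
  by apply: integrableS iF => //; apply: subset_itv; rewrite bnd_simp.
have sT : \int[mu]_(t in `[a, b]) (t * f t) = \int[mu]_(t in `[a, x]) (t * f t)
   + \int[mu]_(t in `[x, y]) (t * f t) + \int[mu]_(t in `[y, b]) (t * f t).
  rewrite (@split_int _ a x b ax xb itf) (@split_int _ x y b xy yb); first ring.
  by apply: integrableS itf => //; apply: subset_itv; rewrite bnd_simp.
have sC : \int[mu]_(t in `[a, b]) (fp t ^+ 2) = \int[mu]_(t in `[a, x]) (fp t ^+ 2)
   + \int[mu]_(t in `[x, y]) (fp t ^+ 2) + \int[mu]_(t in `[y, b]) (fp t ^+ 2).
  rewrite (@split_int _ a x b ax xb ifp2) (@split_int _ x y b xy yb); first ring.
  by apply: integrableS ifp2 => //; apply: subset_itv; rewrite bnd_simp.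
have sY : \int[mu]_(t in `[a, y]) f t = \int[mu]_(t in `[a, x]) f t
   + \int[mu]_(t in `[x, y]) f t.
  rewrite (@split_int _ a x y ax xy) //.
  by apply: integrableS iF => //; apply: subset_itv; rewrite bnd_simp.
have Q1a : Pq a 0 a = 0 by rewrite /Pq subrr expr0n /= mul0r addr0.
have Q3b : Pq b 0 b = 0 by rewrite /Pq subrr expr0n /= mul0r addr0.
have Q2x : Pq m k2 x = Pq a 0 x by rewrite /Pq /k2 /k2f /m; field.
have Q2y : Pq m k2 y = Pq b 0 y by rewrite /Pq /k2 /k2f /m /y; field.
have xnb : x = b -> Pq a 0 x = 0.
  move=> exb; exfalso. have h1 := hab. have h2 := hx2. rewrite exb in h2. move: h1 h2. move=> h1 h2; lra.

have I1 := @ibp_piece a x a 0 (lexx a) ax xb (fun _ => Q1a) xnb.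
have c2a : x = a -> Pq m k2 x = 0.
  by move=> exa; rewrite Q2x exa Q1a.
have c2b : y = b -> Pq m k2 y = 0.
  move=> eyb; rewrite /y in eyb.
  have h1 : a + b - x <= b by rewrite eyb.
  have h2 : b <= a + b - x by rewrite eyb.
  have exa : x = a by apply/eqP; rewrite eq_le; apply/andP; split; lra.
  by rewrite /Pq /k2 /k2f /m /y exa; field.
have I2 := @ibp_piece x y m k2 ax xy yb c2a c2b.
have yna : y = a -> Pq b 0 y = 0.
  move=> eya; exfalso; rewrite /y in eya.
  have h1 : a + b - x <= a by rewrite eya.
  clear eya; lra.
have I3 := @ibp_piece y b b 0 ay yb (lexx b) yna (fun _ => Q3b).
rewrite (@dec_piece a x a) // in I1.
rewrite (@dec_piece x y m) // in I2.
rewrite (@dec_piece y b b) // in I3.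
rewrite Q1a in I1. rewrite Q2x Q2y in I2. rewrite Q3b in I3.
set J1 := \int[mu]_(t in `[a, x]) (fp t * Pq a 0 t) in I1.
set J2 := \int[mu]_(t in `[x, y]) (fp t * Pq m k2 t) in I2.
set J3 := \int[mu]_(t in `[y, b]) (fp t * Pq b 0 t) in I3.
have LE : (cdf_of f a x + cdf_of f a y) / 2 - (b - mean_of f a b) / (b - a)
    = - (J1 + J2 + J3) / (b - a).
  rewrite /cdf_of /mean_of sY sT.
  have hb : b = b * (\int[mu]_(t in `[a, b]) f t) by rewrite hf1 mulr1.
  rewrite [X in X - (_ + _ + _)]hb sA.
  have eJ1 : J1 = f x * Pq a 0 x - f a * 0 - (\int[mu]_(t in `[a, x]) (t * f t) - a * \int[mu]_(t in `[a, x]) f t) by lra.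
  have eJ2 : J2 = f y * Pq b 0 y - f x * Pq a 0 x - (\int[mu]_(t in `[x, y]) (t * f t) - m * \int[mu]_(t in `[x, y]) f t) by lra.
  have eJ3 : J3 = f b * 0 - f y * Pq b 0 y - (\int[mu]_(t in `[y, b]) (t * f t) - b * \int[mu]_(t in `[y, b]) f t) by lra.
  rewrite eJ1 eJ2 eJ3 /m.
  by field; rewrite subr_eq0 gt_eqF.
rewrite LE /L2norm.
set N1 := \int[mu]_(t in `[a, x]) (Pq a 0 t ^+ 2).
set N2 := \int[mu]_(t in `[x, y]) (Pq m k2 t ^+ 2).
set N3 := \int[mu]_(t in `[y, b]) (Pq b 0 t ^+ 2).
set C := \int[mu]_(t in `[a, b]) (fp t ^+ 2).
have HJ : forall l, 0 < l -> `|J1 + J2 + J3| <= (l * (N1 + N2 + N3) + C / l) / 2.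
  move=> l l0.
  have h1 := @cs_piece a x a 0 l (lexx a) ax xb l0.
  have h2 := @cs_piece x y m k2 l ax xy yb l0.
  have h3 := @cs_piece y b b 0 l ay yb (lexx b) l0.
  rewrite -/J1 -/N1 in h1. rewrite -/J2 -/N2 in h2. rewrite -/J3 -/N3 in h3.
  have t1 := ler_normD (J1 + J2) J3.
  have t2 := ler_normD J1 J2.
  rewrite /C sC.
  set C1 := \int[mu]_(t in `[a, x]) (fp t ^+ 2) in h1 *.
  set C2 := \int[mu]_(t in `[x, y]) (fp t ^+ 2) in h2 *.
  set C3 := \int[mu]_(t in `[y, b]) (fp t ^+ 2) in h3 *.
  have -> : (l * (N1 + N2 + N3) + (C1 + C2 + C3) / l) / 2 =
     (l * N1 + C1 / l) / 2 + (l * N2 + C2 / l) / 2 + (l * N3 + C3 / l) / 2.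
    by rewrite !mulrDl; ring.
  lra.
have N0 : 0 <= N1 + N2 + N3.
  by rewrite !addr_ge0 // Rintegral_ge0 // => t _; exact: sqr_ge0.
have C0 : 0 <= C by rewrite Rintegral_ge0 // => t _; exact: sqr_ge0.
have HJs := @amgm_sqrt _ _ _ N0 C0 HJ.
have Nval : N1 + N2 + N3 = (Gq a 0 x - Gq a 0 a) + (Gq m k2 y - Gq m k2 x) + (Gq b 0 b - Gq b 0 y).
  by rewrite /N1 /N2 /N3 !int_Pq2.
have Pi := @poly_ineq a b x ax xm.
rewrite -/m -/k2 -/y -Nval in Pi.
have pi2 := pi_sq_le10 R.
have piP := pi_gt0 R.
have Lp : 0 < b - a by lra.
set L := b - a in Lp Pi HJs *.
set h := (L ^+ 2 / 48 + (x - (3 * a + b) / 4) ^+ 2) in Pi *.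
have h0 : 0 <= h by rewrite /h addr_ge0 // ?sqr_ge0 // divr_ge0 // sqr_ge0.
set N := N1 + N2 + N3 in N0 HJs Pi.
have key : Num.sqrt N * pi <= L * Num.sqrt L * Num.sqrt h.
  have e1 : Num.sqrt N * pi = Num.sqrt (N * pi ^+ 2).
    by rewrite sqrtrM // sqrtr_sqr gtr0_norm.
  have e2 : L * Num.sqrt L * Num.sqrt h = Num.sqrt (L ^+ 2 * L * h).
    rewrite sqrtrM; last by apply: mulr_ge0; [exact: sqr_ge0 | exact: ltW].
    rewrite sqrtrM; last by rewrite sqr_ge0.
    by rewrite sqrtr_sqr gtr0_norm.
  rewrite e1 e2 ler_sqrt; last by apply: mulr_ge0 => //; apply: mulr_ge0; [exact: sqr_ge0 | exact: ltW].
  have : N * pi ^+ 2 <= N * 10 by rewrite ler_wpM2l.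
  lra.
have key2 : Num.sqrt N <= L * Num.sqrt L * Num.sqrt h / pi.
  by rewrite ler_pdivlMr.
rewrite normrM normrN (@gtr0_norm _ L^-1); last by rewrite invr_gt0.
rewrite -/(_ / L) ler_pdivrMr //.
apply: le_trans HJs _.
have sC0 := sqrtr_ge0 C.
apply: le_trans (ler_wpM2r sC0 key2) _.
rewrite le_eqVlt; apply/orP; left; apply/eqP.
ring.
Qed.



End Main.
End Helpers.

Theorem theorem4p2 (R : realType) (a b : R) (f : R -> R)
  (hab : a < b)
  (* f : [a,b] -> [0,1] is a probability density on [a,b] *)
  (hf01 : forall t, a <= t <= b -> 0 <= f t <= 1)
  (hfint : (@lebesgue_measure R).-integrable `[a, b] (fun t => (f t)%:E))
  (hf1 : \int[@lebesgue_measure R]_(t in `[a, b]) f t = 1)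
  (* F is twice continuously differentiable in (a,b), with F' = f *)
  (hF1 : forall x, a < x < b -> derivable (cdf_of f a) x 1 /\ derive1 (cdf_of f a) x = f x)
  (hf2 : forall x, a < x < b -> derivable f x 1)
  (hf'c : {within `]a, b[, continuous derive1 f})
  (* f' in L^2[a,b] *)
  (hf'L2 : (@lebesgue_measure R).-integrable `[a, b] (fun t => ((derive1 f t) ^+ 2)%:E)) :
  forall x, a <= x <= (a + b) / 2 ->
    `| (cdf_of f a x + cdf_of f a (a + b - x)) / 2 - (b - mean_of f a b) / (b - a) |
    <= Num.sqrt (b - a) / pi
       * Num.sqrt ((b - a) ^+ 2 / 48 + (x - (3 * a + b) / 4) ^+ 2)
       * L2norm (derive1 f) a b.
Proof.
move=> x hx.
by apply: main_bound.
Qed.
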